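(* Let $d\ge1$ be a fixed integer and let $G$ be a uniformly random simple $d$-regular graph on $n$ labelled vertices. For a set $E$ of vertex pairs let $\mathcal{X}_E=\mathbf 1\{E\subset E(G)\}$ and $\mathcal{X}_{E^c}=\mathbf 1\{E\cap E(G)=\emptyset\}$ (write $\mathcal{X}_e$ when $E=\{e\}$). Let $E_1,E_2$ be disjoint sets of vertex pairs with $|E_i|=O(\log n)$, $i=1,2$, such that $\mathbb{P}(\mathcal{X}_{E_1}\mathcal{X}_{E_2^c}=1)>0$, and let $e$ be another pair not in $E_1\cup E_2$. Then $$\mathbb{P}(\mathcal{X}_e=1\mid\mathcal{X}_{E_1}\mathcal{X}_{E_2^c}=1)\le\frac dn+O\Big(\frac{|E_1|+|E_2|}{n^2}\Big).$$ Furthermore, if $e$ shares no vertex with any pair in $E_1\cup E_2$, then $$\mathbb{P}(\mathcal{X}_e=1\mid\mathcal{X}_{E_1}\mathcal{X}_{E_2^c}=1)=\frac dn+O\Big(\frac{|E_1|+|E_2|}{n^2}\Big).$$ The same statements hold for a uniformly random simple $d$-regular bipartite graph with $n$ vertices in each part (with all pairs taken between the two parts).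
   Context: The $O(\cdot)$ constants are uniform over all admissible $E_1,E_2,e$ with $|E_1|,|E_2|\le C\log n$ for a fixed constant $C$, and depend only on $d$ and $C$; the statements are for $n$ sufficiently large. *)

(* Defs.v *)
From HB Require Import structures.
From mathcomp Require Import all_boot all_order all_algebra.
From mathcomp Require Import all_classical all_reals all_analysis.
Set Implicit Arguments. Unset Strict Implicit. Unset Printing Implicit Defensive.
Import Order.TTheory GRing.Theory Num.Theory.
Local Open Scope ring_scope.

(* A graph on a finite vertex type V is its edge set: a set of vertex pairs,
   each pair being a 2-element subset of V. *)

Definition simple_pair {V : finType} (p : {set V}) : bool := #|p| == 2%N.

Definition bip_pair {n : nat} (p : {set ('I_n + 'I_n)%type}) : bool :=
  [exists a : 'I_n, exists b : 'I_n, p == [set inl a; inr b]].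

Definition deg {V : finType} (G : {set {set V}}) (v : V) : nat :=
  #|[set p in G | v \in p]|.

(* the (finite) sample space: all d-regular graphs whose edges are admissible
   pairs; the random graph is uniform on this set *)
Definition reg_graphs {V : finType} (ok : pred {set V}) (d : nat)
  : {set {set {set V}}} :=
  [set G : {set {set V}} | [forall p in G, ok p] && [forall v, deg G v == d]].

Definition cond_prob (R : numFieldType) {T : finType} (Om A B : {set T}) : R :=
  (#|Om :&: A :&: B|)%:R / (#|Om :&: B|)%:R.

Definition ev_in_out {V : finType} (E1 E2 : {set {set V}}) : {set {set {set V}}} :=
  [set G : {set {set V}} | (E1 \subset G) && [disjoint E2 & G]].

Definition ev_edge {V : finType} (e : {set V}) : {set {set {set V}}} :=
  [set G : {set {set V}} | e \in G].

(* The content of the lemma, for one model (vertex type V, admissible pairs ok,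
   n = number of vertices (per part in the bipartite case)), with O-constant K
   and size constant C. *)
Definition edge_cond_bounds (R : realType) {V : finType} (ok : pred {set V})
  (d n : nat) (C K : R) : Prop :=
  forall (E1 E2 : {set {set V}}) (e : {set V}),
    (forall p, p \in E1 -> ok p) ->
    (forall p, p \in E2 -> ok p) ->
    ok e ->
    [disjoint E1 & E2] ->
    (#|E1|%:R <= C * ln (n%:R : R)) ->
    (#|E2|%:R <= C * ln (n%:R : R)) ->
    (0 < #|reg_graphs ok d :&: ev_in_out E1 E2|)%N ->
    e \notin E1 :|: E2 ->
    let P := cond_prob R (reg_graphs ok d) (ev_edge e) (ev_in_out E1 E2) in
    let err := K * ((#|E1| + #|E2| + 1)%:R / (n%:R ^+ 2)) in
    P <= d%:R / n%:R + err /\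
    ((forall p, p \in E1 :|: E2 -> [disjoint e & p]) ->
       `|P - d%:R / n%:R| <= err).

(* Main.v *)
Require Import Defs.
From HB Require Import structures.
From mathcomp Require Import all_boot all_order all_algebra.
From mathcomp Require Import all_classical all_reals all_analysis.
From mathcomp Require Import ring lra zify.
Set Implicit Arguments. Unset Strict Implicit. Unset Printing Implicit Defensive.
Import Order.TTheory GRing.Theory Num.Theory.

Lemma card_set_sum (T : finType) (E : {set T}) (P : pred T) :
  #|[set p in E | P p]| = \sum_(p in E) (P p : nat).
Proof.
rewrite -sum1_card big_mkcond [RHS]big_mkcond /=.
by apply: eq_bigr => p _; rewrite !inE; case: (p \in E); case: (P p).
Qed.

Lemma card_pairs (T U : finType) (X : {set T}) (F : T -> {set U}) :
  #|[set t : T * U | (t.1 \in X) && (t.2 \in F t.1)]| = \sum_(x in X) #|F x|.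
Proof.
rewrite -sum1_card.
rewrite (eq_bigl (fun t : T * U => (t.1 \in X) && (t.2 \in F t.1))); last first.
  by move=> t; rewrite inE.
rewrite -(pair_big_dep (fun x => x \in X) (fun x y => y \in F x) (fun _ _ => 1)) /=.
by apply: eq_bigr => x _; rewrite sum1_card.
Qed.

Lemma sum_le_const (T : finType) (X : {set T}) (f : T -> nat) k :
  (forall x, x \in X -> f x <= k) -> \sum_(x in X) f x <= #|X| * k.
Proof. by move=> H; rewrite -sum_nat_const; apply: leq_sum. Qed.

Lemma cover_card (T : finType) (P : pred T) (rs : seq (pred T)) :
  (forall t, P t -> has (fun R : pred T => R t) rs) ->
  #|[set t | P t]| <= \sum_(R <- rs) #|[set t | R t]|.
Proof.
elim: rs P => [|R rs IH] P H.
  rewrite big_nil leqn0 cards_eq0; apply/eqP/setP => t; rewrite !inE.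
  by apply/negbTE/negP => /H.
rewrite big_cons.
apply: (@leq_trans (#|[set t | R t]| + #|[set t | P t && ~~ R t]|)).
  apply: leq_trans (leq_card_setU _ _).
  by apply: subset_leq_card; apply/fintype.subsetP => t; rewrite !inE; case: (R t); rewrite ?orbT ?andbT.
rewrite leq_add2l; apply: IH => t /andP [/H /= Pt nR].
by move: Pt; rewrite (negbTE nR).
Qed.

Section Gen.
Variable V : finType.
Implicit Types (G E : {set {set V}}) (p q : {set V}).

Definition nbr G x := [set y | [set x; y] \in G].

Lemma set2C (x y : V) : [set x; y] = [set y; x].
Proof. by rewrite finset.setUC. Qed.

Lemma nbrC G x y : (y \in nbr G x) = (x \in nbr G y).
Proof. by rewrite !inE set2C. Qed.

Lemma set2_inj (x : V) : injective (fun y => [set x; y]).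
Proof.
move=> y y' /= E.
have : y \in [set x; y'] by rewrite -E !inE eqxx orbT.
rewrite !inE => /orP [/eqP yx|/eqP //].
have : y' \in [set x; y] by rewrite E !inE eqxx orbT.
by rewrite !inE yx orbb => /eqP ->.
Qed.

Lemma card_nbr G x : #|nbr G x| <= deg G x.
Proof.
rewrite -(card_imset _ (@set2_inj x)) /deg; apply: subset_leq_card.
apply/fintype.subsetP => p /imsetP [y]; rewrite inE => yG ->.
by rewrite inE yG !inE eqxx.
Qed.

Lemma card_nbr_eq G x : (forall p, p \in G -> #|p| = 2) -> #|nbr G x| = deg G x.
Proof.
move=> H2; apply/eqP; rewrite eqn_leq card_nbr /=.
rewrite -(card_imset _ (@set2_inj x)) /deg; apply: subset_leq_card.
apply/fintype.subsetP => p; rewrite inE => /andP [pG xp].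
have /cards2P [a [b [ab pE]]] : #|p| == 2 by rewrite H2.
move: xp; rewrite pE !inE => /orP [/eqP ->|/eqP ->]; apply/imsetP.
  by exists b => //; rewrite inE -pE.
by exists a; rewrite ?inE -?pE // set2C -pE.
Qed.

Lemma handshake E : (forall p, p \in E -> #|p| = 2) ->
  \sum_x deg E x = #|E| * 2.
Proof.
move=> H2; rewrite /deg.
rewrite (eq_bigr (fun x => \sum_(p in E) (x \in p : nat))); last first.
  by move=> x _; rewrite card_set_sum.
rewrite exchange_big /= -sum_nat_const; apply: eq_bigr => p pE.
by rewrite -(H2 p pE) -sum1_card [RHS]big_mkcond; apply: eq_bigr => x _; case: (x \in p).
Qed.

Lemma card_pairs_sw (X : {set V}) (F : V -> {set V}) :
  #|[set t : V * V | (t.2 \in X) && (t.1 \in F t.2)]| = \sum_(x in X) #|F x|.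
Proof.
rewrite -card_pairs.
have inj : injective (fun t : V * V => (t.2, t.1)) by move=> [a b] [c d] [-> ->].
rewrite -[in RHS](card_imset _ inj); apply: eq_card => -[a b].
rewrite !inE /=; apply/idP/imsetP => [H|[[c d]]]; first by exists (b, a); rewrite // inE.
by rewrite inE => /= H [-> ->].
Qed.

Lemma deg_sw G (R Ad : {set {set V}}) (w : V) : R \subset G -> [disjoint Ad & G] ->
  deg ((G :\: R) :|: Ad) w + #|[set p in R | w \in p]| =
  deg G w + #|[set p in Ad | w \in p]|.
Proof.
move=> RG AdG; rewrite /deg.
have -> : [set p in (G :\: R) :|: Ad | w \in p] =
   [set p in G :\: R | w \in p] :|: [set p in Ad | w \in p].
  by apply/setP => p; rewrite !inE; case: (p \in Ad); case: (w \in p); rewrite ?andbF ?orbF ?orbT.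
have -> : [set p in G | w \in p] =
   [set p in G :\: R | w \in p] :|: [set p in R | w \in p].
  apply/setP => p; rewrite !inE; case pR: (p \in R); case: (w \in p); rewrite ?andbF ?orbF ?orbT ?andbT //=.
  by move/fintype.subsetP: RG => /(_ p pR) ->.
rewrite !cardsU.
have -> : [set p in G :\: R | w \in p] :&: [set p in Ad | w \in p] = finset.set0.
  apply/setP => p; rewrite !inE; case pA: (p \in Ad); rewrite ?andbF //=.
  by have := disjointFr AdG pA => ->; rewrite andbF.
have -> : [set p in G :\: R | w \in p] :&: [set p in R | w \in p] = finset.set0.
  by apply/setP => p; rewrite !inE; case: (p \in R); rewrite ?andbF.
by rewrite !cards0 !subn0 addnAC.
Qed.

Lemma card_in_set3 (A B C : {set V}) w : A != B -> A != C -> B != C ->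
  #|[set p in [set A; B; C] | w \in p]| = (w \in A) + (w \in B) + (w \in C).
Proof.
move=> AB AC BC; rewrite card_set_sum.
have -> : [set A; B; C] = A |: (B |: [set C]) by apply/setP => p; rewrite !inE orbA.
rewrite big_setU1 /=; last by rewrite !inE negb_or AB AC.
rewrite big_setU1 /=; last by rewrite !inE BC.
by rewrite big_set1 addnA.
Qed.

Lemma card_in_set2 (A B : {set V}) w : A != B ->
  #|[set p in [set A; B] | w \in p]| = (w \in A) + (w \in B).
Proof.
move=> AB; rewrite card_set_sum.
rewrite big_setU1 /=; last by rewrite !inE AB.
by rewrite big_set1.
Qed.

Lemma in_set2n (a b w : V) : a != b -> (w \in [set a; b] : nat) = (w == a) + (w == b).
Proof.
move=> ab; rewrite !inE; case: (w =P a) => [->|]; last by case: (w == b).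
by rewrite (negbTE ab).
Qed.

Lemma set2_neq (a b : V) (S : {set V}) : a \notin S -> [set a; b] != S.
Proof. by move=> aS; apply/eqP => E; move: aS; rewrite -E !inE eqxx. Qed.

Lemma set2_neq' (a b : V) (S : {set V}) : b \notin S -> [set a; b] != S.
Proof. by rewrite set2C; apply: set2_neq. Qed.

Definition sw G (R Ad : {set {set V}}) := (G :\: R) :|: Ad.

Lemma sw_K G (R Ad : {set {set V}}) : R \subset G -> [disjoint Ad & G] -> G = (sw G R Ad :\: Ad) :|: R.
Proof.
move=> RG AdG; apply/setP => p; rewrite /sw !inE.
case pR: (p \in R); first by rewrite orbT (fintype.subsetP RG).
case pA: (p \in Ad) => /=; last by rewrite ?orbF ?andbT.
by rewrite (disjointFr AdG pA).
Qed.

End Gen.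

Lemma disjW (T : finType) (A B : {set T}) :
  (forall p, p \in A -> p \notin B) -> [disjoint A & B].
Proof.
move=> H; rewrite -finset.setI_eq0; apply/eqP/setP => p; rewrite !inE.
by case pA: (p \in A) => //=; apply/negbTE/H.
Qed.

Section Switch.
Variable V : finType.
Variables (ok : pred {set V}) (n d : nat).
Hypothesis ok2 : forall p, ok p -> #|p| = 2.
Hypothesis okX : forall u, n.-1 <= #|[set x | ok [set u; x]]| <= n.
Hypothesis oksq : forall p q r s : V, ok [set p; q] -> ok [set p; r] ->
  ok [set q; s] -> r != s -> ok [set r; s].

Local Notation Reg := (reg_graphs ok d).
Implicit Types (G : {set {set V}}).

Lemma regP G : G \in Reg -> (forall p, p \in G -> ok p) /\ (forall w, deg G w = d).
Proof.
rewrite inE => /andP [/forallP H1 /forallP H2]; split => [p pG|w].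
  by move: (H1 p); rewrite pG.
exact/eqP.
Qed.

Lemma regI G : (forall p, p \in G -> ok p) -> (forall w, deg G w = d) -> G \in Reg.
Proof.
move=> H1 H2; rewrite inE; apply/andP; split; apply/forallP => x.
  by apply/implyP => /H1.
by rewrite H2.
Qed.

Lemma ok_neq (a b : V) : ok [set a; b] -> a != b.
Proof. by move/ok2; rewrite cards2; case: (a != b). Qed.

Lemma reg_nbr G a : G \in Reg -> #|nbr G a| = d.
Proof.
move=> /regP [H1 H2]; rewrite card_nbr_eq ?H2 // => p /H1; exact: ok2.
Qed.

Lemma reg_edge G a b : G \in Reg -> b \in nbr G a -> ok [set a; b].
Proof. by move=> /regP [H1 _]; rewrite inE => /H1. Qed.

Definition Ms G (a b : V) := [set t : V * V |
  [&& [set t.1; t.2] \in G, ok [set a; t.1] & ok [set b; t.2]]].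

Lemma Ms_le G a b : G \in Reg -> #|Ms G a b| <= n * d.
Proof.
move=> GR.
apply: (@leq_trans #|[set t : V * V | (t.1 \in [set x | ok [set a; x]]) && (t.2 \in nbr G t.1)]|).
  apply: subset_leq_card; apply/fintype.subsetP => -[x y]; rewrite !inE /=.
  by case/and3P => -> -> _.
rewrite card_pairs; apply: leq_trans (sum_le_const (k := d) _) _.
  by move=> x _; rewrite reg_nbr.
by rewrite leq_mul2r; case/andP: (okX a) => _ ->; rewrite orbT.
Qed.

Lemma Ms_ge G a b : G \in Reg -> ok [set a; b] -> n * d <= #|Ms G a b| + 2 * d.
Proof.
move=> GR ab.
have H := @cover_card _ (fun t : V * V => (t.1 \in [set x | ok [set a; x]]) && (t.2 \in nbr G t.1))
  [:: (fun t => t \in Ms G a b); (fun t : V * V => (t.2 \in [set b]) && (t.1 \in nbr G t.2))].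
rewrite big_cons big_seq1 in H.
have E : [set t | t \in Ms G a b] = Ms G a b by apply/setP => t; rewrite inE.
rewrite E card_pairs_sw big_set1 reg_nbr // in H.
rewrite card_pairs (eq_bigr (fun _ => d)) ?sum_nat_const in H; last by move=> x _; rewrite reg_nbr.
have {}H := H _.
have : #|[set x | ok [set a; x]]| * d <= #|Ms G a b| + d.
  apply: H => -[x y] /=; rewrite /Ms /nbr !inE /= => /andP [ax xy].
  case: (y =P b) => [yb|/eqP yb]; first by rewrite [[set y; x]]set2C xy ?orbT.
  apply/orP; left; rewrite xy ax /=.
  rewrite set2C; apply: (oksq (p := x) (q := a)) => //.
    by rewrite set2C.
  by apply: reg_edge GR _; rewrite inE.
case/andP: (okX a) => h1 _ h2.
move: h1 h2; set X := #|[set x | ok [set a; x]]|; set M := #|Ms G a b| => h1 h2.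
have h3 : n <= X + 1 by lia.
have h4 : n * d <= (X + 1) * d by rewrite leq_mul2r h3 orbT.
lia.
Qed.


Lemma sw_reg G (R Ad : {set {set V}}) : G \in Reg -> R \subset G -> [disjoint Ad & G] ->
  (forall p, p \in Ad -> ok p) ->
  (forall w, #|[set p in R | w \in p]| = #|[set p in Ad | w \in p]|) ->
  sw G R Ad \in Reg.
Proof.
move=> /regP [H1 H2] RG AdG Hok Hw; apply: regI.
  by move=> p; rewrite /sw !inE => /orP [/andP [_ /H1]|/Hok].
move=> w; have := deg_sw w RG AdG; rewrite Hw H2 => /eqP.
by rewrite eqn_add2r => /eqP.
Qed.

Lemma sw_io G (R Ad : {set {set V}}) E1 E2 : G \in ev_in_out E1 E2 ->
  (forall p, p \in R -> p \notin E1) -> (forall p, p \in Ad -> p \notin E2) ->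
  sw G R Ad \in ev_in_out E1 E2.
Proof.
rewrite !inE => /andP [E1G E2G] HR HA; apply/andP; split.
  apply/fintype.subsetP => p pE1; rewrite /sw !inE (fintype.subsetP E1G _ pE1) andbT.
  by case pR: (p \in R) => //; have := HR p pR; rewrite pE1.
apply: disjW => p pE2; rewrite /sw !inE negb_or.
rewrite (disjointFr E2G pE2) andbF /=.
by case pA: (p \in Ad) => //; have := HA p pA; rewrite pE2.
Qed.

Lemma sw_inj (R Ad : {set {set V}}) G1 G2 : R \subset G1 -> [disjoint Ad & G1] ->
  R \subset G2 -> [disjoint Ad & G2] -> sw G1 R Ad = sw G2 R Ad -> G1 = G2.
Proof.
move=> h1 h2 h3 h4 E; rewrite (sw_K h1 h2) (sw_K h3 h4) E //.
Qed.



Lemma set_memE (T : finType) (A : {set T}) : [set t | t \in A] = A.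
Proof. by apply/setP => t; rewrite inE. Qed.

Lemma cardB (X : {set V}) (F : V -> {set V}) k : (forall x, x \in X -> #|F x| <= k) ->
  #|[set t : V * V | (t.1 \in X) && (t.2 \in F t.1)]| <= #|X| * k.
Proof. by move=> H; rewrite card_pairs; apply: sum_le_const. Qed.

Lemma cardBs (X : {set V}) (F : V -> {set V}) k : (forall x, x \in X -> #|F x| <= k) ->
  #|[set t : V * V | (t.2 \in X) && (t.1 \in F t.2)]| <= #|X| * k.
Proof. by move=> H; rewrite card_pairs_sw; apply: sum_le_const. Qed.

Lemma cardBE (E : {set {set V}}) : (forall p, p \in E -> ok p) ->
  #|[set t : V * V | (t.1 \in [set: V]) && (t.2 \in nbr E t.1)]| <= 2 * #|E|.
Proof.
move=> H; rewrite card_pairs mulnC -handshake; last by move=> p /H /ok2.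
rewrite (eq_bigl (fun _ => true)); last by move=> x; rewrite inE.
by apply: leq_sum => x _; exact: card_nbr.
Qed.

Lemma card_nbrE (E : {set {set V}}) a : #|nbr E a| <= #|E|.
Proof.
apply: leq_trans (card_nbr E a) _; apply: subset_leq_card.
by apply/fintype.subsetP => p; rewrite inE => /andP [].
Qed.

Section Two.
Variables (E1 E2 : {set {set V}}) (u v : V).
Hypothesis oke : ok [set u; v].
Hypothesis E1ok : forall p, p \in E1 -> ok p.
Hypothesis E2ok : forall p, p \in E2 -> ok p.
Hypothesis eE1 : [set u; v] \notin E1.
Hypothesis eE2 : [set u; v] \notin E2.

Local Notation e := [set u; v].
Definition Om := Reg :&: ev_in_out E1 E2.
Definition Aset := Om :&: ev_edge e.
Definition Bset := Om :\: ev_edge e.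

Definition R2 (t : V * V) := [set e; [set t.1; t.2]].
Definition Ad2 (t : V * V) := [set [set u; t.1]; [set v; t.2]].
Definition S2 G := [set t : V * V | [&& [set t.1; t.2] \in G, ok [set u; t.1],
  ok [set v; t.2], t.1 \notin e, t.2 \notin e, t.1 \notin nbr G u,
  t.2 \notin nbr G v, [set t.1; t.2] \notin E1, [set u; t.1] \notin E2
  & [set v; t.2] \notin E2]].
Definition Q2 G := [set t : V * V | (t.1 \in nbr G u) && (t.2 \in nbr G v)].

Lemma uv : u != v. Proof. exact: ok_neq. Qed.

Lemma S2_facts G x y : G \in Aset -> (x, y) \in S2 G ->
  [/\ R2 (x, y) \subset G, [disjoint Ad2 (x, y) & G] & sw G (R2 (x, y)) (Ad2 (x, y)) \in Bset
   /\ (x, y) \in Q2 (sw G (R2 (x, y)) (Ad2 (x, y)))].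
Proof.
move=> /finset.setIP [/finset.setIP [GR Gio] eG].
rewrite /S2 inE /= => /and5P [h1 h2 h3 h4 /and5P [h5 h6 h7 h8 /andP [h9 h10]]].
have xy : x != y by apply: ok_neq; case/regP: GR => H _; apply: H.
have ux : u != x by apply: ok_neq.
have vy : v != y by apply: ok_neq.
rewrite !inE !negb_or in h4 h5; case/andP: h4 => xu xv; case/andP: h5 => yu yv.
rewrite inE in eG.
have RG : R2 (x, y) \subset G.
  by apply/fintype.subsetP => p; rewrite !inE => /orP [/eqP ->|/eqP ->].
have AdG : [disjoint Ad2 (x, y) & G].
  by apply: disjW => p; rewrite !inE => /orP [/eqP ->|/eqP ->]; [move: h6 | move: h7]; rewrite inE.
split => //.
have neR : e != [set x; y] by rewrite eq_sym; apply: set2_neq; rewrite !inE negb_or xu xv.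
have neA : [set u; x] != [set v; y] by apply: set2_neq; rewrite !inE negb_or uv eq_sym yu.
split.
  rewrite /Bset /Om; apply/finset.setDP; split; last first.
    rewrite /sw /R2 /Ad2 !inE eqxx /= !negb_or.
    apply/andP; split.
      by apply: set2_neq'; rewrite !inE negb_or eq_sym uv eq_sym xv.
    by apply: set2_neq; rewrite !inE negb_or uv eq_sym yu.
  apply/finset.setIP; split; last apply: sw_io Gio _ _.
  apply: sw_reg GR RG AdG _ _.
  - by move=> p; rewrite /Ad2 !inE => /orP [/eqP ->|/eqP ->].
  - move=> w; rewrite /R2 /Ad2 /= card_in_set2 // card_in_set2 //.
    by rewrite (in_set2n _ uv) (in_set2n _ xy) (in_set2n _ ux) (in_set2n _ vy) addnACA.
  - by move=> p; rewrite /R2 !inE => /orP [/eqP ->|/eqP ->].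
  - by move=> p; rewrite /Ad2 !inE => /orP [/eqP ->|/eqP ->].
by rewrite /Q2 /nbr /sw !inE /= !eqxx !orbT.
Qed.

Definition cc := 10 * d + 2 * (d * d) + 2 * #|E1| + 2 * (#|E2| * d).

Lemma S2_bound G : G \in Aset -> n * d <= #|S2 G| + cc.
Proof.
move=> GA; have GR : G \in Reg by move: GA => /finset.setIP [/finset.setIP []].
have M := Ms_ge GR oke.
pose rs := [:: (fun t => t \in S2 G);
      (fun t : V * V => (t.1 \in e) && (t.2 \in nbr G t.1));
      (fun t : V * V => (t.2 \in e) && (t.1 \in nbr G t.2));
      (fun t : V * V => (t.1 \in nbr G u) && (t.2 \in nbr G t.1));
      (fun t : V * V => (t.2 \in nbr G v) && (t.1 \in nbr G t.2));
      (fun t : V * V => (t.1 \in [set: V]) && (t.2 \in nbr E1 t.1));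
      (fun t : V * V => (t.1 \in nbr E2 u) && (t.2 \in nbr G t.1));
      (fun t : V * V => (t.2 \in nbr E2 v) && (t.1 \in nbr G t.2))].
suff cov : forall t, t \in Ms G u v -> has (fun R : pred (V * V) => R t) rs.
have C := cover_card cov.
rewrite /rs !big_cons big_nil /= !set_memE in C.
have ce : #|e| = 2 by rewrite cards2 uv.
have b1 := @cardB e (nbr G) d (fun x _ => eq_leq (reg_nbr x GR)).
have b2 := @cardBs e (nbr G) d (fun x _ => eq_leq (reg_nbr x GR)).
have b3 := @cardB (nbr G u) (nbr G) d (fun x _ => eq_leq (reg_nbr x GR)).
have b4 := @cardBs (nbr G v) (nbr G) d (fun x _ => eq_leq (reg_nbr x GR)).
have b5 := cardBE E1ok.
have b6 := @cardB (nbr E2 u) (nbr G) d (fun x _ => eq_leq (reg_nbr x GR)).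
have b7 := @cardBs (nbr E2 v) (nbr G) d (fun x _ => eq_leq (reg_nbr x GR)).
rewrite (reg_nbr u GR) (reg_nbr v GR) ce in b1 b2 b3 b4.
have b6' := leq_trans b6 (leq_mul (card_nbrE E2 u) (leqnn d)).
have b7' := leq_trans b7 (leq_mul (card_nbrE E2 v) (leqnn d)).
clear b6 b7; move: M C b1 b2 b3 b4 b5 b6' b7'; rewrite /cc.
set m := #|Ms G u v|; set s2 := #|S2 G|.
move=> M C b1 b2 b3 b4 b5 b6 b7.
have C2 := leq_trans C (leq_add (leqnn s2) (leq_add b1 (leq_add b2 (leq_add b3
  (leq_add b4 (leq_add b5 (leq_add b6 (leq_add b7 (leqnn 0))))))))).
clear C b1 b2 b3 b4 b5 b6 b7; lia.
move=> [x y]; rewrite /rs /=; rewrite /Ms inE /= => /and3P [h1 h2 h3].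
case S: ((x, y) \in S2 G); first by [].
have hy : y \in nbr G x by rewrite inE.
have hx : x \in nbr G y by rewrite inE set2C.
rewrite hy hx finset.in_setT /= !andbT.
case a1: (x \in e) => //=. case a2: (y \in e) => //=.
case a3: (x \in nbr G u) => //=. case a4: (y \in nbr G v) => //=.
case a5: (y \in nbr E1 x) => //=. case a6: (x \in nbr E2 u) => //=.
case a7: (y \in nbr E2 v) => //=.
move: a3 a4 a5 a6 a7; rewrite !inE => a3 a4 a5 a6 a7.
move: S; rewrite /S2 inE /= h1 h2 h3 a1 a2 /nbr !inE a3 a4 a5 a6 a7 //.
Qed.

Lemma Q2_card G : G \in Reg -> #|Q2 G| = d * d.
Proof.
move=> GR; rewrite /Q2 (card_pairs (nbr G u) (fun _ => nbr G v)) (eq_bigr (fun _ => d)); last by move=> x _; rewrite reg_nbr.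
by rewrite sum_nat_const reg_nbr.
Qed.

Lemma up_count : #|Aset| * (n * d) <= #|Bset| * (d * d) + #|Aset| * cc.
Proof.
pose T := [set g : {set {set V}} * (V * V) | (g.1 \in Aset) && (g.2 \in S2 g.1)].
pose T' := [set g : {set {set V}} * (V * V) | (g.1 \in Bset) && (g.2 \in Q2 g.1)].
have cT : #|T| = \sum_(G in Aset) #|S2 G| by rewrite /T card_pairs.
have cT' : #|T'| = #|Bset| * (d * d).
  rewrite /T' card_pairs -sum_nat_const; apply: eq_bigr => G GB; apply: Q2_card.
  by move: GB => /finset.setDP [/finset.setIP []].
pose f (g : {set {set V}} * (V * V)) := (sw g.1 (R2 g.2) (Ad2 g.2), g.2).
have TT : #|T| <= #|T'|.
  have inj : {in T &, injective f}.
    move=> [G1 [x1 y1]] [G2 [x2 y2]]; rewrite /T !(finset.in_set (fun g : {set {set V}} * (V * V) => (g.1 \in Aset) && (g.2 \in S2 g.1))) /=.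
    move=> /andP [g1 s1] /andP [g2 s2] [E ex ey].
    subst x2 y2; case: (S2_facts g1 s1) => r1 a1 _; case: (S2_facts g2 s2) => r2 a2 _.
    by rewrite (sw_inj r1 a1 r2 a2 E).
  rewrite -(card_in_imset inj); apply: subset_leq_card; apply/fintype.subsetP => g.
  case/imsetP => -[G [x y]]; rewrite /T (finset.in_set (fun g : {set {set V}} * (V * V) => (g.1 \in Aset) && (g.2 \in S2 g.1))) /= => /andP [GA S] ->.
  by case: (S2_facts GA S) => _ _ [hB hQ]; rewrite /T' (finset.in_set (fun g : {set {set V}} * (V * V) => (g.1 \in Bset) && (g.2 \in Q2 g.1))) /= hB hQ.
have : \sum_(G in Aset) (n * d) <= \sum_(G in Aset) (#|S2 G| + cc).
  by apply: leq_sum => G GA; apply: S2_bound.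
by rewrite big_split /= -cT !sum_nat_const mulnC => H; apply: (leq_trans H); rewrite leq_add2r -cT'.
Qed.

Section Three.
Hypothesis hE1u : forall p, p \in E1 -> u \notin p.
Hypothesis hE1v : forall p, p \in E1 -> v \notin p.

Definition W (xy : V * V) := [set u; v; xy.1; xy.2].
Definition H3 G (xy : V * V) := [set ab : V * V | [&& [set ab.1; ab.2] \in G,
  ok [set v; ab.1], ok [set u; ab.2], ab.1 \notin W xy, ab.2 \notin W xy,
  ab.1 \notin nbr G xy.1, ab.2 \notin nbr G xy.2, [set ab.1; ab.2] \notin E1,
  [set xy.1; ab.1] \notin E2 & [set xy.2; ab.2] \notin E2]].
Definition S3 G := [set t : (V * V) * (V * V) | (t.1 \in Q2 G) && (t.2 \in H3 G t.1)].
Definition R3 (t : (V * V) * (V * V)) :=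
  [set [set u; t.1.1]; [set v; t.1.2]; [set t.2.1; t.2.2]].
Definition Ad3 (t : (V * V) * (V * V)) :=
  [set e; [set t.1.1; t.2.1]; [set t.1.2; t.2.2]].
Definition F3 G := [set t : (V * V) * (V * V) |
  ((t.1.1, t.2.1) \in Ms G u v) && ((t.1.2, t.2.2) \in Ms G v u)].

Lemma W_card xy : #|W xy| <= 4.
Proof.
have -> : W xy = u |: (v |: (xy.1 |: [set xy.2])).
  by apply/setP => z; rewrite !inE !orbA.
rewrite !cardsU1 cards1.
by case: (u \in _); case: (v \in _); case: (xy.1 \in _).
Qed.

Lemma S3_facts G x y a b : G \in Bset -> ((x, y), (a, b)) \in S3 G ->
  [/\ R3 ((x, y), (a, b)) \subset G, [disjoint Ad3 ((x, y), (a, b)) & G] &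
   sw G (R3 ((x, y), (a, b))) (Ad3 ((x, y), (a, b))) \in Aset /\
   ((x, y), (a, b)) \in F3 (sw G (R3 ((x, y), (a, b))) (Ad3 ((x, y), (a, b))))].
Proof.
move=> /finset.setDP [/finset.setIP [GR Gio] eG].
rewrite /S3 inE /= => /andP [hQ hH].
move: hQ; rewrite /Q2 inE /= => /andP [xu yv].
move: hH; rewrite /H3 inE /= => /and5P [h1 h2 h3 h4 /and5P [h5 h6 h7 h8 /andP [h9 h10]]].
rewrite inE in eG.
have okux := reg_edge GR xu.
have okvy := reg_edge GR yv.
have okab : ok [set a; b] by case/regP: GR => H _; apply: H.
have ux := ok_neq okux. have vy := ok_neq okvy. have ab := ok_neq okab.
rewrite /W !inE !negb_or in h4 h5.
case/andP: h4 => /andP [/andP [au av] ax] ay; case/andP: h5 => /andP [/andP [bu bv] bx] by_.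
have yu : y != u.
  apply/eqP => E; move: yv; rewrite inE E set2C => H; by rewrite H in eG.
have xa : x != a by rewrite eq_sym.
have yb : y != b by rewrite eq_sym.
have RG : R3 ((x, y), (a, b)) \subset G.
  apply/fintype.subsetP => p; rewrite /R3 !inE /= => /orP [/orP [/eqP ->|/eqP ->]|/eqP ->] //.
  - by move: xu; rewrite inE.
  - by move: yv; rewrite inE.
have AdG : [disjoint Ad3 ((x, y), (a, b)) & G].
  apply: disjW => p; rewrite /Ad3 !inE /= => /orP [/orP [/eqP ->|/eqP ->]|/eqP ->] //.
  - by move: h6; rewrite inE.
  - by move: h7; rewrite inE.
split => //.
have n1 : [set u; x] != [set v; y] by apply: set2_neq; rewrite !inE negb_or uv eq_sym yu.
have n2 : [set u; x] != [set a; b] by apply: set2_neq; rewrite !inE negb_or !(eq_sym u) au bu.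
have n3 : [set v; y] != [set a; b] by apply: set2_neq; rewrite !inE negb_or !(eq_sym v) av bv.
have m1 : e != [set x; a] by rewrite eq_sym; apply: set2_neq'; rewrite !inE negb_or au av.
have m2 : e != [set y; b] by rewrite eq_sym; apply: set2_neq'; rewrite !inE negb_or bu bv.
have m3 : [set x; a] != [set y; b] by apply: set2_neq'; rewrite !inE negb_or ay ab.
have okxa : ok [set x; a] by apply: (oksq oke okux h2 xa).
have okyb : ok [set y; b] by apply: (oksq (p := v) (q := u)) => //; rewrite set2C.
have inAd : forall p, p \in Ad3 ((x, y), (a, b)) -> p \in sw G (R3 ((x, y), (a, b))) (Ad3 ((x, y), (a, b))).
  by move=> p pA; rewrite /sw inE pA orbT.
split.
  apply/finset.setIP; split; last first.
    by rewrite inE; apply: inAd; rewrite /Ad3 !inE eqxx.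
  apply/finset.setIP; split; last apply: sw_io Gio _ _.
  apply: sw_reg GR RG AdG _ _.
  - by move=> p; rewrite /Ad3 !inE /= => /orP [/orP [/eqP ->|/eqP ->]|/eqP ->].
  - move=> w; rewrite /R3 /Ad3 /= card_in_set3 // card_in_set3 //.
    rewrite (in_set2n _ uv) (in_set2n _ ux) (in_set2n _ vy) (in_set2n _ ab).
    rewrite (in_set2n _ xa) (in_set2n _ yb).
    move: (w == u) (w == v) (w == x) (w == y) (w == a) (w == b) => [] [] [] [] [] [] //.
  - move=> p; rewrite /R3 !inE /= => /orP [/orP [/eqP ->|/eqP ->]|/eqP ->] //.
    + by apply/negP => /hE1u; rewrite !inE eqxx.
    + by apply/negP => /hE1v; rewrite !inE eqxx.
  - by move=> p; rewrite /Ad3 !inE /= => /orP [/orP [/eqP ->|/eqP ->]|/eqP ->].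
have s1 : [set x; a] \in sw G (R3 ((x, y), (a, b))) (Ad3 ((x, y), (a, b))).
  by apply: inAd; rewrite /Ad3 !inE eqxx ?orbT.
have s2 : [set y; b] \in sw G (R3 ((x, y), (a, b))) (Ad3 ((x, y), (a, b))).
  by apply: inAd; rewrite /Ad3 !inE eqxx ?orbT.
rewrite /F3 inE /=; apply/andP; split; rewrite /Ms inE /=; apply/and3P; split => //.
Qed.

Lemma H3_bound G xy : G \in Reg -> xy \in Q2 G -> n * d <= #|H3 G xy| + cc.
Proof.
move=> GR; case: xy => x y; rewrite /Q2 inE /= => /andP [xu yv].
have M := Ms_ge GR (etrans (congr1 ok (set2C v u)) oke).
pose rs := [:: (fun t => t \in H3 G (x, y));
      (fun t : V * V => (t.1 \in W (x, y)) && (t.2 \in nbr G t.1));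
      (fun t : V * V => (t.2 \in W (x, y)) && (t.1 \in nbr G t.2));
      (fun t : V * V => (t.1 \in nbr G x) && (t.2 \in nbr G t.1));
      (fun t : V * V => (t.2 \in nbr G y) && (t.1 \in nbr G t.2));
      (fun t : V * V => (t.1 \in [set: V]) && (t.2 \in nbr E1 t.1));
      (fun t : V * V => (t.1 \in nbr E2 x) && (t.2 \in nbr G t.1));
      (fun t : V * V => (t.2 \in nbr E2 y) && (t.1 \in nbr G t.2))].
suff cov : forall t, t \in Ms G v u -> has (fun R : pred (V * V) => R t) rs.
have C := cover_card cov.
rewrite /rs !big_cons big_nil /= !set_memE in C.
have b1 := @cardB (W (x, y)) (nbr G) d (fun z _ => eq_leq (reg_nbr z GR)).
have b2 := @cardBs (W (x, y)) (nbr G) d (fun z _ => eq_leq (reg_nbr z GR)).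
have b3 := @cardB (nbr G x) (nbr G) d (fun z _ => eq_leq (reg_nbr z GR)).
have b4 := @cardBs (nbr G y) (nbr G) d (fun z _ => eq_leq (reg_nbr z GR)).
have b5 := cardBE E1ok.
have b6 := @cardB (nbr E2 x) (nbr G) d (fun z _ => eq_leq (reg_nbr z GR)).
have b7 := @cardBs (nbr E2 y) (nbr G) d (fun z _ => eq_leq (reg_nbr z GR)).
rewrite (reg_nbr x GR) (reg_nbr y GR) in b3 b4.
have b1' := leq_trans b1 (leq_mul (W_card (x, y)) (leqnn d)).
have b2' := leq_trans b2 (leq_mul (W_card (x, y)) (leqnn d)).
have b6' := leq_trans b6 (leq_mul (card_nbrE E2 x) (leqnn d)).
have b7' := leq_trans b7 (leq_mul (card_nbrE E2 y) (leqnn d)).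
have C2 := leq_trans C (leq_add (leqnn _) (leq_add b1' (leq_add b2' (leq_add b3
  (leq_add b4 (leq_add b5 (leq_add b6' (leq_add b7' (leqnn 0))))))))).
move: M C2; rewrite /cc.
set m := #|Ms G v u|; set s2 := #|H3 G (x, y)|.
clear; lia.
move=> [a b]; rewrite /rs /=; rewrite /Ms inE /= => /and3P [h1 h2 h3].
case S: ((a, b) \in H3 G (x, y)); first by [].
have hb : b \in nbr G a by rewrite inE.
have ha : a \in nbr G b by rewrite inE set2C.
rewrite hb ha finset.in_setT /= !andbT.
case a1: (a \in W (x, y)) => //=. case a2: (b \in W (x, y)) => //=.
case a3: (a \in nbr G x) => //=. case a4: (b \in nbr G y) => //=.
case a5: (b \in nbr E1 a) => //=. case a6: (a \in nbr E2 x) => //=.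
case a7: (b \in nbr E2 y) => //=.
move: a3 a4 a5 a6 a7; rewrite !inE => a3 a4 a5 a6 a7.
move: S; rewrite /H3 inE /= h1 h2 h3 a1 a2 /nbr !inE a3 a4 a5 a6 a7 //.
Qed.

Lemma F3_card G : G \in Reg -> #|F3 G| <= (n * d) * (n * d).
Proof.
move=> GR.
pose r (t : (V * V) * (V * V)) := ((t.1.1, t.2.1), (t.1.2, t.2.2)).
have rinj : injective r by move=> [[? ?] [? ?]] [[? ?] [? ?]] [-> -> -> ->].
rewrite -(card_imset _ rinj).
apply: (@leq_trans #|finset.setX (Ms G u v) (Ms G v u)|).
  apply: subset_leq_card; apply/fintype.subsetP => z /imsetP [t].
  by rewrite /F3 inE => /andP [t1 t2] ->; rewrite finset.in_setX t1 t2.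
by rewrite finset.cardsX leq_mul // Ms_le.
Qed.

Lemma low_count : #|Bset| * (d * d) * (n * d) <=
  #|Aset| * ((n * d) * (n * d)) + #|Bset| * (d * d) * cc.
Proof.
pose T := [set g : {set {set V}} * ((V * V) * (V * V)) | (g.1 \in Bset) && (g.2 \in S3 g.1)].
pose T' := [set g : {set {set V}} * ((V * V) * (V * V)) | (g.1 \in Aset) && (g.2 \in F3 g.1)].
have cT : #|T| = \sum_(G in Bset) #|S3 G| by rewrite /T card_pairs.
have cT' : #|T'| <= #|Aset| * ((n * d) * (n * d)).
  rewrite /T' card_pairs; apply: sum_le_const => G GA; apply: F3_card.
  by move: GA => /finset.setIP [/finset.setIP []].
pose f (g : {set {set V}} * ((V * V) * (V * V))) := (sw g.1 (R3 g.2) (Ad3 g.2), g.2).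
pose PT := (fun g : {set {set V}} * ((V * V) * (V * V)) => (g.1 \in Bset) && (g.2 \in S3 g.1)).
pose PT' := (fun g : {set {set V}} * ((V * V) * (V * V)) => (g.1 \in Aset) && (g.2 \in F3 g.1)).
have TT : #|T| <= #|T'|.
  have inj : {in T &, injective f}.
    move=> [G1 [[x1 y1] [a1 b1]]] [G2 [[x2 y2] [a2 b2]]]; rewrite /T !(finset.in_set PT) /PT /=.
    move=> /andP [g1 s1] /andP [g2 s2] [E ex ey ea eb].
    subst x2 y2 a2 b2; case: (S3_facts g1 s1) => r1 d1 _; case: (S3_facts g2 s2) => r2 d2 _.
    by rewrite (sw_inj r1 d1 r2 d2 E).
  rewrite -(card_in_imset inj); apply: subset_leq_card; apply/fintype.subsetP => g.
  case/imsetP => -[G [[x y] [a b]]]; rewrite /T (finset.in_set PT) /PT /= => /andP [GB S] ->.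
  by case: (S3_facts GB S) => _ _ [hA hF]; rewrite /T' (finset.in_set PT') /PT' /= hA hF.
have per : forall G, G \in Bset -> (d * d) * (n * d) <= #|S3 G| + (d * d) * cc.
  move=> G GB; have GR : G \in Reg by move: GB => /finset.setDP [/finset.setIP []].
  rewrite /S3 card_pairs -(Q2_card GR) -!sum_nat_const -big_split /=.
  by apply: leq_sum => xy xyQ; apply: H3_bound.
have : \sum_(G in Bset) ((d * d) * (n * d)) <= \sum_(G in Bset) (#|S3 G| + (d * d) * cc).
  by apply: leq_sum.
rewrite big_split /= -cT !sum_nat_const => H.
have H2 := leq_trans TT cT'.
move: H H2; set X := #|Bset|; set Y := #|Aset|; set t := #|T|.
clear; nia.
Qed.

End Three.

End Two.

End Switch.

Section Simple.
Variable n : nat.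
Local Notation V := 'I_n.

Lemma sp_ok2 (p : {set V}) : simple_pair p -> #|p| = 2.
Proof. by move/eqP. Qed.

Lemma sp_okX (u : V) : n.-1 <= #|[set x | simple_pair [set u; x]]| <= n.
Proof.
have -> : [set x | simple_pair [set u; x]] = [set~ u].
  apply/setP => x; rewrite !inE /simple_pair cards2.
  case E: (x == u); first by move/eqP: E => ->; rewrite eqxx.
  by rewrite (eq_sym u x) E.
by rewrite cardsC1 card_ord leqnn leq_pred.
Qed.

Lemma sp_oksq (p q r s : V) : simple_pair [set p; q] -> simple_pair [set p; r] ->
  simple_pair [set q; s] -> r != s -> simple_pair [set r; s].
Proof. by move=> _ _ _ rs; rewrite /simple_pair cards2 rs. Qed.
End Simple.

Section Bip.
Variable n : nat.
Local Notation V := ('I_n + 'I_n)%type.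
Definition side (x : V) : bool := if x is inl _ then true else false.

Lemma bipE (p q : V) : bip_pair [set p; q] = (side p != side q).
Proof.
apply/idP/idP.
  case/existsP => a /existsP [b /eqP E].
  have h1 : inl a \in [set p; q] by rewrite E !inE eqxx.
  have h2 : inr b \in [set p; q] by rewrite E !inE eqxx orbT.
  have h3 : p \in [set inl a; inr b] by rewrite -E !inE eqxx.
  have h4 : q \in [set inl a; inr b] by rewrite -E !inE eqxx orbT.
  move: h1 h2 h3 h4; rewrite !inE; clear E.
  by case: p => p; case: q => q.
case: p => a; case: q => b //= _.
  by apply/existsP; exists a; apply/existsP; exists b.
by apply/existsP; exists b; apply/existsP; exists a; rewrite set2C.
Qed.

Lemma bp_ok2 (p : {set V}) : bip_pair p -> #|p| = 2.
Proof. by case/existsP => a /existsP [b /eqP ->]; rewrite cards2. Qed.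

Lemma bp_okX (u : V) : n.-1 <= #|[set x | bip_pair [set u; x]]| <= n.
Proof.
suff -> : #|[set x | bip_pair [set u; x]]| = n by rewrite leq_pred leqnn.
case: u => a.
  have -> : [set x | bip_pair [set inl a; x]] = [set inr b | b in 'I_n].
    apply/setP => x; rewrite inE bipE; case: x => b /=.
      by apply/esym/imsetP => -[c _].
    by apply/esym/imsetP; exists b.
  by rewrite card_imset ?card_ord // => x y [].
have -> : [set x | bip_pair [set inr a; x]] = [set inl b | b in 'I_n].
  apply/setP => x; rewrite inE bipE; case: x => b /=.
    by apply/esym/imsetP; exists b.
  by apply/esym/imsetP => -[c _].
by rewrite card_imset ?card_ord // => x y [].
Qed.

Lemma bp_oksq (p q r s : V) : bip_pair [set p; q] -> bip_pair [set p; r] ->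
  bip_pair [set q; s] -> r != s -> bip_pair [set r; s].
Proof.
rewrite !bipE => h1 h2 h3 _.
by move: h1 h2 h3; case: (side p); case: (side q); case: (side r); case: (side s).
Qed.
End Bip.

Local Open Scope ring_scope.

Section RealArith.
Variable R : realFieldType.

Lemma real_up (a b n d c : R) : 0 <= a -> 0 <= b -> 0 < a + b -> 0 < n -> 0 < d ->
  0 <= c -> 2 * c <= n * d -> a * (n * d) <= b * (d * d) + a * c ->
  a / (a + b) <= d / n + 2 * c / (n ^+ 2).
Proof.
move=> a0 b0 ab0 n0 d0 c0 hc H.
have -> : d / n + 2 * c / n ^+ 2 = (d * n + 2 * c) / n ^+ 2.
  by field; rewrite gt_eqF.
have n2 : 0 < n ^+ 2 by rewrite exprn_gt0.
rewrite ler_pdivrMr // mulrAC ler_pdivlMr //.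
have dd : 0 < d * d by rewrite mulr_gt0.
rewrite -(ler_pM2l dd).
have H1 : 0 <= (b * (d * d) - a * (n * d - c)) * (d * n + 2 * c).
  by apply: mulr_ge0; [lra | nra].
have H2 : 0 <= a * c * (n * d - 2 * c) by apply: mulr_ge0; [nra | lra].
have H3 : 0 <= a * (d * d) * (d * n + 2 * c) by apply: mulr_ge0; nra.
rewrite expr2; nra.
Qed.

Lemma real_low (a b n d c : R) : 0 <= a -> 0 <= b -> 0 < a + b -> 0 < n -> 0 < d ->
  0 <= c -> c <= n * d ->
  b * (d * d) * (n * d) <= a * ((n * d) * (n * d)) + b * (d * d) * c ->
  d / n - (d * d + c) / (n ^+ 2) <= a / (a + b).
Proof.
move=> a0 b0 ab0 n0 d0 c0 hc H.
have dd : 0 < d * d by rewrite mulr_gt0.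
have H' : b * (n * d - c) <= a * (n * n).
  rewrite -(ler_pM2l dd); nra.
have -> : d / n - (d * d + c) / n ^+ 2 = (d * n - d * d - c) / n ^+ 2.
  by field; rewrite gt_eqF.
have n2 : 0 < n ^+ 2 by rewrite exprn_gt0.
rewrite ler_pdivlMr // mulrAC ler_pdivrMr // expr2.
set K := d * n - d * d - c.
case: (lerP K 0) => hK.
  by apply: le_trans (_ : 0 <= _); [nra | nra].
have hp : 0 < n * d - c by rewrite /K in hK; nra.
rewrite -(ler_pM2l hp).
have H1 : 0 <= K * (a * (n * n) - b * (n * d - c)) by apply: mulr_ge0; lra.
have H2 : 0 <= a * (d * d * (n * d - c)) by apply: mulr_ge0; nra.
have H3 : 0 <= a * ((n * d) ^+ 2 - (n * d - c) ^+ 2) by apply: mulr_ge0; nra.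
rewrite /K in H1 hK *; nra.
Qed.

End RealArith.

Definition c0 (d : nat) : nat := (12 * d + 2 * (d * d) + 2)%N.

Lemma model_bounds (R : realType) (V : finType) (ok : pred {set V}) (n d : nat) (C : R) :
  (forall p, ok p -> #|p| = 2) ->
  (forall u, (n.-1 <= #|[set x | ok [set u; x]]| <= n)%N) ->
  (forall p q r s : V, ok [set p; q] -> ok [set p; r] -> ok [set q; s] ->
     r != s -> ok [set r; s]) ->
  (0 < d)%N -> (0 < n)%N ->
  2 * (c0 d)%:R * (2 * C * ln (n%:R : R) + 1) <= n%:R ->
  edge_cond_bounds ok d n C (2 * (c0 d)%:R + (d * d)%:R).
Proof.
move=> ok2 okX oksq d0 n0 hn E1 E2 e hE1 hE2 hok _ h1 h2 hpos he P err.
rewrite {}/P {}/err.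
have /cards2P [u [v [uv eE]]] : #|e| == 2%N by rewrite ok2.
subst e.
have eE1 : [set u; v] \notin E1 by move: he; rewrite finset.in_setU negb_or => /andP [].
have eE2 : [set u; v] \notin E2 by move: he; rewrite finset.in_setU negb_or => /andP [].
have cA : #|reg_graphs ok d :&: ev_edge [set u; v] :&: ev_in_out E1 E2| =
  #|Aset ok d E1 E2 u v| by rewrite /Aset /Om finset.setIAC.
have cO : #|reg_graphs ok d :&: ev_in_out E1 E2| =
  (#|Aset ok d E1 E2 u v| + #|Bset ok d E1 E2 u v|)%N.
  by rewrite /Aset /Bset /Om finset.cardsID.
rewrite /cond_prob cA cO.
rewrite cO in hpos.
have hup := @up_count V ok n d ok2 okX oksq E1 E2 u v hok hE1 eE1 eE2.
have hlowI := @low_count V ok n d ok2 okX oksq E1 E2 u v hok hE1 eE2.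
move: hup hpos hlowI.
set a := #|Aset ok d E1 E2 u v|; set b := #|Bset ok d E1 E2 u v|.
set c := cc d E1 E2.
move=> hup hpos hlowI.
set eps := (#|E1| + #|E2| + 1)%N.
have ccle : (c <= c0 d * eps)%N by rewrite /c /cc /c0 /eps; nia.
clearbody c.
have epsR : (eps%:R : R) <= 2 * C * ln (n%:R : R) + 1.
  by rewrite /eps !natrD; lra.
have hcn : (2 * c <= n * d)%N.
  have h0 : (0 : R) <= 2 * (c0 d)%:R by rewrite mulr_ge0 ?ler0n.
  have : ((2 * c0 d * eps)%N%:R : R) <= n%:R.
    rewrite !natrM; apply: le_trans hn.
    nra.
  rewrite ler_nat => H.
  apply: (leq_trans _ (leq_trans H _)); first by rewrite -mulnA leq_mul2l ccle orbT.
  by rewrite leq_pmulr.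
have nR : (0 : R) < n%:R by rewrite ltr0n.
have dR : (0 : R) < d%:R by rewrite ltr0n.
have abR : (0 : R) < a%:R + b%:R by rewrite -natrD ltr0n.
have hcnR : 2 * (c%:R : R) <= n%:R * d%:R.
  by move: hcn; rewrite -(ler_nat R) !natrM.
have hupR : (a%:R : R) * (n%:R * d%:R) <= b%:R * (d%:R * d%:R) + a%:R * c%:R.
  by move: hup; rewrite -(ler_nat R) !natrD !natrM.
have Up := real_up (ler0n _ a) (ler0n _ b) abR nR dR (ler0n _ c) hcnR hupR.
have n2 : (0 : R) < n%:R ^+ 2 by rewrite exprn_gt0.
have e1 : (1 <= eps)%N by rewrite /eps addn1.
have K1n : (2 * c <= (2 * c0 d + d * d) * eps)%N by clear -ccle e1; nia.
have K2n : (d * d + c <= (2 * c0 d + d * d) * eps)%N by clear -ccle e1; nia.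
have K1 : 2 * (c%:R : R) <= (2 * (c0 d)%:R + (d * d)%:R) * eps%:R.
  by move: K1n; rewrite -(ler_nat R) !(natrD, natrM).
have K2 : (d%:R * d%:R + c%:R : R) <= (2 * (c0 d)%:R + (d * d)%:R) * eps%:R.
  by move: K2n; rewrite -(ler_nat R) !(natrD, natrM).
have L1 : 2 * (c%:R : R) / n%:R ^+ 2 <= (2 * (c0 d)%:R + (d * d)%:R) * (eps%:R / n%:R ^+ 2).
  by rewrite mulrA ler_wpM2r // invr_ge0 ltW.
have L2 : (d%:R * d%:R + c%:R : R) / n%:R ^+ 2 <= (2 * (c0 d)%:R + (d * d)%:R) * (eps%:R / n%:R ^+ 2).
  by rewrite mulrA ler_wpM2r // invr_ge0 ltW.
clearbody eps; rewrite natrD.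
split; first by lra.
move=> hdj.
have hE1u : forall p, p \in E1 -> u \notin p.
  move=> p pE; apply/negbT; apply: (disjointFr (hdj p _)); first by rewrite finset.in_setU pE.
  by rewrite !inE eqxx.
have hE1v : forall p, p \in E1 -> v \notin p.
  move=> p pE; apply/negbT; apply: (disjointFr (hdj p _)); first by rewrite finset.in_setU pE.
  by rewrite !inE eqxx orbT.
have hlow := hlowI hE1u hE1v.
have hlowR : (b%:R : R) * (d%:R * d%:R) * (n%:R * d%:R) <=
    a%:R * ((n%:R * d%:R) * (n%:R * d%:R)) + b%:R * (d%:R * d%:R) * c%:R.
  by move: hlow; rewrite -(ler_nat R) !natrD !natrM.
have hcnR' : (c%:R : R) <= n%:R * d%:R by have := ler0n R c; lra.
have Lo := real_low (ler0n _ a) (ler0n _ b) abR nR dR (ler0n _ c) hcnR' hlowR.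
rewrite ler_norml; apply/andP; split; lra.
Qed.

Lemma large_n (R : realType) (C : R) (k0 : nat) : 0 < C -> (0 < k0)%N ->
  exists N : nat, (0 < N)%N /\ forall n : nat, (N <= n)%N ->
    2 * k0%:R * (2 * C * ln (n%:R : R) + 1) <= n%:R.
Proof.
move=> C0 k00.
have kR : (0 : R) < k0%:R by rewrite ltr0n.
pose k : R := 8 * k0%:R * C.
have k0' : 0 < k by rewrite /k !mulr_gt0.
pose L : R := 8 * k0%:R * C * ln k + 4 * k0%:R.
exists (Num.truncn L).+1; split => // n hn.
have nL : L < n%:R.
  apply: lt_le_trans (truncnS_gt L) _; by rewrite ler_nat.
have n0 : (0 : R) < n%:R by rewrite ltr0n (leq_trans _ hn).
have nk : 0 < n%:R / k by rewrite divr_gt0.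
have lnb : ln (n%:R : R) <= ln k + (n%:R / k - 1).
  have nE : (n%:R : R) = k * (n%:R / k) by field; rewrite gt_eqF.
  rewrite {1}nE lnM ?posrE // lerD2l.
  have h := @le_ln1Dx R (n%:R / k - 1).
  rewrite [1 + _]addrC subrK in h; apply: h; lra.
have e : 4 * k0%:R * C * (n%:R / k) = n%:R / 2.
  by rewrite /k; field; rewrite !gt_eqF.
have h4 : 0 <= 4 * k0%:R * C by rewrite !mulr_ge0 // ltW.
have H := ler_wpM2l h4 lnb.
have e' : 4 * k0%:R * C * (ln k + (n%:R / k - 1)) =
  4 * k0%:R * C * ln k + n%:R / 2 - 4 * k0%:R * C by rewrite -e; ring.
rewrite e' in H.
have hC : 0 <= 4 * k0%:R * C by [].
rewrite /L in nL.
nra.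
Qed.

Theorem lemma6p8 (R : realType) (d : nat) (C : R) :
  (0 < d)%N -> 0 < C ->
  exists (K : R) (N : nat), forall n : nat, (N <= n)%N ->
    edge_cond_bounds (@simple_pair 'I_n) d n C K /\
    edge_cond_bounds (@bip_pair n) d n C K.
Proof.
move=> d0 C0.
have c00 : (0 < c0 d)%N by rewrite /c0 addn2.
have [N [N0 HN]] := large_n C0 c00.
exists (2 * (c0 d)%:R + (d * d)%:R), N => n hn.
have n0 : (0 < n)%N by apply: leq_trans hn.
split.
  apply: model_bounds => //; [exact: sp_ok2 | exact: sp_okX | exact: sp_oksq | exact: HN].
apply: model_bounds => //; [exact: bp_ok2 | exact: bp_okX | exact: bp_oksq | exact: HN].
Qed.
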